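(* If $X$ is a regular set star Hurewicz space, then every closed discrete subspace of $X$ has cardinality less than $\mathfrak c$. Hence $e(X)\leq\mathfrak c$.
   Context: For a family $\mathcal U$ of subsets of $X$ and $A\subseteq X$, $st(A,\mathcal U)=\bigcup\{U\in\mathcal U: U\cap A\neq\emptyset\}$. $X$ is set star Hurewicz if for every nonempty $A\subseteq X$ and every sequence $(\mathcal U_n:n\in\omega)$ of families of open subsets with $\overline A\subseteq\bigcup\mathcal U_n$ for all $n$, there are finite $\mathcal V_n\subseteq\mathcal U_n$ such that every $x\in A$ belongs to $st(\bigcup\mathcal V_n,\mathcal U_n)$ for all but finitely many $n$. $e(X)$ is the supremum of cardinalities of closed discrete subsets; $\mathfrak c=2^{\aleph_0}$. *)

(* Defs.v *)
From HB Require Import structures.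
From mathcomp Require Import all_boot all_order.
From mathcomp Require Import all_classical all_reals all_analysis.
Set Implicit Arguments. Unset Strict Implicit. Unset Printing Implicit Defensive.
Local Open Scope classical_set_scope.

Definition star {T : Type} (A : set T) (U : set (set T)) : set T :=
  [set x | exists2 V, U V & (V `&` A !=set0 /\ V x)].

Definition set_star_hurewicz (T : topologicalType) : Prop :=
  forall (A : set T), A !=set0 ->
  forall (Us : nat -> set (set T)),
    (forall n, Us n `<=` open) ->
    (forall n, closure A `<=` \bigcup_(V in Us n) V) ->
    exists Vs : nat -> set (set T),
      (forall n, finite_set (Vs n) /\ Vs n `<=` Us n) /\
      (forall x, A x -> exists N : nat, forall n, (N <= n)%N ->
          star (\bigcup_(V in Vs n) V) (Us n) x).

Definition closed_discrete (T : topologicalType) (D : set T) : Prop :=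
  closed D /\ forall x, D x -> exists U : set T, [/\ open U, U x & U `&` D = [set x]].

(* Main.v *)
Require Import Defs.
From HB Require Import structures.
From mathcomp Require Import all_boot all_order.
From mathcomp Require Import all_classical all_reals all_analysis.
From Stdlib Require Cantor.
Local Open Scope classical_set_scope.
Local Open Scope card_scope.

Lemma reg_sep (X : topologicalType) (C : set X) (x : X) :
  regular_space X -> closed C -> ~ C x ->
  exists B : set X, [/\ open B, B x & forall y, C y -> ~ closure B y].
Proof.
move=> reg cC Cx.
have : nbhs x (~` C) by apply: open_nbhs_nbhs; split => //; exact: closed_openC.
move=> /reg [N Nx NC].
move: Nx; rewrite nbhsE => -[B [oB Bx] BN].
exists B; split => // y Cy clBy.
by apply: (NC y) => //; exact: (closureS BN).
Qed.

Lemma cd_sub (X : topologicalType) (D E : set X) :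
  closed_discrete D -> E `<=` D -> closed E.
Proof.
move=> [cD dD] ED y Ey.
have Dy : D y by apply: cD; exact: (closureS ED).
have [U [oU Uy UD]] := dD y Dy.
have [e [Ee Ue]] := Ey U (open_nbhs_nbhs (conj oU Uy)).
have : (U `&` D) e by split => //; exact: ED.
by rewrite UD => /= ey; rewrite -ey.
Qed.

Definition pr (a b : nat) : nat := Cantor.to_nat (a, b).
Definition len (x : nat -> nat) n := x (pr 0 n).
Definition elt (x : nat -> nat) n i : nat -> nat := fun m => x (pr (pr n i).+2 m).

Lemma seq_enum (T : eqType) (U : (nat -> nat) -> T) (s : seq T) :
  (forall V, V \in s -> exists y, V = U y) ->
  exists k (g : nat -> nat -> nat), forall V, V \in s -> exists i, (i < k)%N /\ V = U (g i).
Proof.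
elim: s => [|V s IH] H.
  by exists 0%N, (fun _ => id) => V; rewrite in_nil.
have [y Vy] := H V (mem_head _ _).
have [k [g Hg]] : exists k (g : nat -> nat -> nat), forall V, V \in s -> exists i, (i < k)%N /\ V = U (g i).
  by apply: IH => W Ws; apply: H; rewrite inE Ws orbT.
exists k.+1, (fun i => if i == k then y else g i) => W; rewrite inE => /orP[/eqP ->|Ws].
  by exists k; rewrite eqxx ltnSn.
have [i [ik ->]] := Hg W Ws; exists i; split; first exact: ltnW.
by rewrite (ltn_eqF ik).
Qed.

Lemma code_exists (k : nat -> nat) (g : nat -> nat -> nat -> nat) :
  exists x : nat -> nat, [/\ forall n, len x n = k n,
    forall n i, elt x n i = g n i & forall n i, x <> g n i].
Proof.
pose x m := let (a, b) := Cantor.of_nat m in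
  match a with 0 => k b
  | 1 => let (n, i) := Cantor.of_nat b in (g n i m).+1
  | a'.+2 => let (n, i) := Cantor.of_nat a' in g n i b end.
exists x; split.
- by move=> n; rewrite /len /x /pr Cantor.cancel_of_to.
- move=> n i; apply: funext => m.
  by rewrite /elt /x /pr !Cantor.cancel_of_to.
- move=> n i xg.
  have := congr1 (fun h => h (pr 1 (pr n i))) xg => /=.
  rewrite {1}/x /pr !Cantor.cancel_of_to.
  by move=> /esym /n_Sn.
Qed.

Lemma no_inj (X : topologicalType) (D : set X) (f : (nat -> nat) -> X) :
  regular_space X -> set_star_hurewicz X -> closed_discrete D ->
  injective f -> (forall x, D (f x)) -> False.
Proof.
move=> reg ssh cdD finj fD.
pose E := range f.
have ED : E `<=` D by move=> _ [x _ <-].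
have cE : closed E by exact: (@cd_sub X D).
have hB : forall y, exists B : set X,
    [/\ open B, B (f y) & forall z, (E `\ f y) z -> ~ closure B z].
  move=> y; apply: reg_sep => //.
    by apply: (@cd_sub X D) => // z [Ez _]; exact: ED.
  by move=> [_]; apply.
have [B HB] := choice hB.
have Bo y : open (B y) by case: (HB y).
have By y : B y (f y) by case: (HB y).
have Bsep x y : x <> y -> ~ closure (B y) (f x).
  move=> xy; case: (HB y) => _ _; apply; split; first by exists x.
  by move=> /finj.
pose S x n := [set i | (i < len x n)%N /\ elt x n i <> x].
pose U n x := B x `\` \bigcup_(i in S x n) closure (B (elt x n i)).
pose Us n := range (U n).
have UB n x : U n x `<=` B x by move=> z [].
have Ufx n x : U n x (f x).
  split => //; move=> [i [_ ex] cl]; exact: (Bsep _ _ (nesym ex)) cl.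
have E0 : E !=set0 by exists (f point); exists point.
have Uso n : Us n `<=` open.
  move=> _ [x _ <-]; rewrite /U setDE; apply: openI => //.
  apply: closed_openC; apply: closed_bigcup => [|i _]; last exact: closed_closure.
  by apply: (sub_finite_set (B := `I_(len x n))) => [i []|]; [|exact: finite_II].
have Uscov n : closure E `<=` \bigcup_(V in Us n) V.
  move=> z /cE [x _ <-]; exists (U n x) => //; by exists x.
have [Vs [HVs Hstar]] := ssh E E0 Us Uso Uscov.
have hkg : forall n, exists kg : nat * (nat -> nat -> nat), forall V, Vs n V ->
    exists i, (i < kg.1)%N /\ V = U n (kg.2 i).
  move=> n; have [fin sub] := HVs n.
  have [s Es] := (finite_seqP _).1 fin.
  have hs : forall V, V \in s -> exists y, V = U n y.
    move=> V Vs'; have : Vs n V by rewrite Es.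
    by move=> /sub [y _ e]; exists y; rewrite e.
  have [k [g Hg]] := @seq_enum _ (U n) s hs.
  by exists (k, g) => V VsV; apply: Hg; move: VsV; rewrite Es.
have [kg Hkg] := choice hkg.
have [x [lx ex nx]] := code_exists (fun n => (kg n).1) (fun n => (kg n).2).
have [N HN] := Hstar (f x) (ex_intro2 _ _ x I erefl).
have [W [y _ <-] [[z [Wz [V VsV Vz]]] Wx]] := HN N (leqnn N).
have xy : x = y.
  apply: contrapT => xy; apply: (Bsep _ _ xy); apply: subset_closure.
  exact: UB Wx.
subst y.
have [i [ik eV]] := Hkg N V VsV.
case: Wz => _; apply; exists i.
  by split; rewrite ?lx ?ex //; exact: nesym.
rewrite ex; apply: subset_closure; apply: (UB N); by rewrite -eV.
Qed.
Lemma getinj (T U : Type) (D : set T) : [set: U] #<= D ->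
  exists f : U -> T, injective f /\ forall x, D (f x).
Proof.
move=> /card_leP [F].
pose h (x : U) := \val (F (SigSub (mem_set (I : [set: U] x)))).
exists h; split.
  move=> x y /val_inj hxy.
  have := @inj _ _ _ F _ _ (mem_set I) (mem_set I) hxy.
  by move=> /(congr1 val).
move=> x; rewrite /h; exact: set_mem (valP _).
Qed.

Lemma compar (T : Type) (U : pointedType) (A : set T) :
  (exists f : T -> U, {in A &, injective f}) \/
  (exists g : U -> T, injective g /\ forall u, A (g u)).
Proof.
pose P (G : set (T * U)) := [/\ forall p, G p -> A p.1,
  forall a b b', G (a, b) -> G (a, b') -> b = b' &
  forall a a' b, G (a, b) -> G (a', b) -> a = a'].
have [G [[GA Gf Gi] Gmax]] : exists G, P G /\ forall B, G `<` B -> ~ P B.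
  apply: Zorn_bigcup => F FP Ftot; split.
  - by move=> p [G FG Gp]; case: (FP G FG) => h _ _; exact: h _ Gp.
  - move=> a b b' [G1 F1 G1p] [G2 F2 G2p].
    have [s12|s21] := Ftot _ _ F1 F2.
      by have [_ h _] := FP G2 F2; exact: h _ _ _ (s12 _ G1p) G2p.
    by have [_ h _] := FP G1 F1; exact: h _ _ _ G1p (s21 _ G2p).
  - move=> a a' b [G1 F1 G1p] [G2 F2 G2p].
    have [s12|s21] := Ftot _ _ F1 F2.
      by have [_ _ h] := FP G2 F2; exact: h _ _ _ (s12 _ G1p) G2p.
    by have [_ _ h] := FP G1 F1; exact: h _ _ _ G1p (s21 _ G2p).
have [totA|] := pselect (forall a, A a -> exists b, G (a, b)).
  left.
  have : forall a, exists b, A a -> G (a, b).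
    move=> a; have [Aa|nAa] := pselect (A a).
      by have [b Gb] := totA a Aa; exists b.
    by exists point.
  move=> /choice [f Hf]; exists f => a a' /set_mem Aa /set_mem Aa' faa'.
  by apply: (Gi _ _ (f a)); [exact: Hf | rewrite faa'; exact: Hf].
move=> /existsNP [a0 /not_implyP [Aa0 /forallNP na0]].
have [totU|] := pselect (forall b, exists a, G (a, b)).
  right; have [g Hg] := choice totU; exists g; split.
    by move=> u v guv; apply: (Gf (g u)); [exact: Hg | rewrite guv; exact: Hg].
  by move=> u; exact: (GA _ (Hg u)).
move=> /existsNP [b0 /forallNP nb0]; exfalso.
apply: (Gmax (G `|` [set (a0, b0)])).
  split; first by move=> p Gp; left.
  by move=> /(_ (a0, b0)) /(_ (or_intror erefl)); exact: na0.
split.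
- by move=> [a b] [Gp|[-> _]]; [exact: GA _ Gp | exact: Aa0].
- move=> a b b' [Gab|/pair_equal_spec [-> ->]] [Gab'|/pair_equal_spec [ea eb]].
  + exact: (Gf _ _ _ Gab Gab').
  + by exfalso; apply: (na0 b); rewrite -ea.
  + by exfalso; apply: (na0 b').
  + by rewrite eb.
- move=> a a' b [Gab|/pair_equal_spec [-> ->]] [Gab'|/pair_equal_spec [ea eb]].
  + exact: (Gi _ _ _ Gab Gab').
  + by exfalso; apply: (nb0 a); rewrite -eb.
  + by exfalso; apply: (nb0 a').
  + by rewrite ea.
Qed.


Theorem theorem4p2 (X : topologicalType) :
  accessible_space X -> regular_space X -> set_star_hurewicz X ->
  forall D : set X, closed_discrete D ->
    D #<= [set: nat -> bool] /\ ~ ([set: nat -> bool] #<= D).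
Proof.
move=> _ reg ssh D cdD.
have noinj : forall g : (nat -> bool) -> X, injective g -> (forall u, D (g u)) -> False.
  move=> g ginj gD.
  pose e (x : nat -> nat) : nat -> bool :=
    fun m => x (Cantor.of_nat m).1 == (Cantor.of_nat m).2.
  have einj : injective e.
    move=> x y exy; apply: funext => a.
    have := congr1 (fun h => h (Cantor.to_nat (a, x a))) exy.
    by rewrite /e Cantor.cancel_of_to /= eqxx => /esym /eqP.
  apply: (@no_inj X D (g \o e) reg ssh cdD) => //.
  exact: inj_comp.
  by move=> x; exact: gD.
split.
- have [[f finj]|[g [ginj gD]]] := compar X (nat -> bool) D.
  + by apply/pcard_injP; exists f.
  + by exfalso; exact: noinj g ginj gD.
- by move=> /getinj [g [ginj gD]]; exact: noinj g ginj gD.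
Qed.
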